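(* (a) For all $S\in\{L,R\}^*$, $M(S)\equiv N(S)\pmod 2$. (b) Let $S=S(k_0,\dots,k_m)$ and $S'=S(k'_0,\dots,k'_n)$ be strings, and set $k_i=0$ for $i>m$ and $k'_i=0$ for $i>n$. Then $r(S)<r(S')$ if and only if there is an index $i\geq0$ such that $k_j=k'_j$ for all $j<i$ and either $i$ is even and $k_i<k'_i$, or $i$ is odd and $k_i>k'_i$ (an ''alternating lexicographic'' ordering of $(k_0,k_1,k_2,\dots)$).
   Context: $\{L,R\}^*$ is the free monoid on $L,R$ (strings), with empty string $\varepsilon$; $|S|$ is the number of symbols of $S$. For $k_0\geq 0$, $k_1,\dots,k_m\geq 1$, $S(k_0,\dots,k_m)$ is the string $R^{k_0}L^{k_1}R^{k_2}\cdots$ with $m+1$ alternating blocks (last block $R^{k_m}$ if $m$ even, $L^{k_m}$ if $m$ odd); each string has exactly one such representation, with $\varepsilon=S(0)$. Define $M(\varepsilon)=0$ and $M(S(k_0,\dots,k_m))=m$ (where $k_m\geq1$ if $m\geq 1$). Define $N(\varepsilon)=0$, $N(SL)=2N(S)+1$, $N(SR)=2N(S)+2$. Define $r(\varepsilon)=1$, $r(SL)=r(S)-2^{-|SL|}$, $r(SR)=r(S)+2^{-|SR|}$. *)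

(* Defs.v *)
From mathcomp Require Import all_boot all_order all_algebra.
Set Implicit Arguments. Unset Strict Implicit. Unset Printing Implicit Defensive.
Import Order.TTheory GRing.Theory Num.Theory.

Inductive LR := L | R.

Definition flipLR (b : LR) := match b with L => R | R => L end.

Fixpoint blocks (b : LR) (ks : seq nat) : seq LR :=
  match ks with
  | [::] => [::]
  | k :: t => nseq k b ++ blocks (flipLR b) t
  end.

Definition Sof (ks : seq nat) : seq LR := blocks R ks.

Definition valid_ks (ks : seq nat) : bool :=
  (ks != [::]) && all (fun k => 0 < k) (behead ks).

(* M(S) = m where S = S(k_0,...,k_m) is the (unique) representation *)
Definition Mof (ks : seq nat) : nat := (size ks).-1.

(* N and r, defined by recursion on appending a letter at the end;
   we recurse on the reversed string. *)
Fixpoint Nrev (s : seq LR) : nat :=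
  match s with
  | [::] => 0
  | L :: t => (Nrev t).*2 + 1
  | R :: t => (Nrev t).*2 + 2
  end.
Definition N (S : seq LR) : nat := Nrev (rev S).

Local Open Scope ring_scope.
Fixpoint rrev (s : seq LR) : rat :=
  match s with
  | [::] => 1
  | L :: t => rrev t - (2%:R ^- (size s))
  | R :: t => rrev t + (2%:R ^- (size s))
  end.
Definition r (S : seq LR) : rat := rrev (rev S).

(* Main.v *)
Require Import Defs.
From mathcomp Require Import all_boot all_order all_algebra.
From mathcomp Require Import ring lra zify.
Import Order.TTheory GRing.Theory Num.Theory.
Local Open Scope ring_scope.

Definition sg (x : LR) : rat := if x is L then -1 else 1.
Fixpoint val (s : seq LR) : rat :=
  match s with [::] => 0 | x :: t => (sg x + val t) / 2 end.

Lemma val_bound s : -1 < val s /\ val s < 1.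
Proof.
elim: s => [|x t [h1 h2]] /=; first by split; lra.
case: x => /=; split; lra.
Qed.

Lemma val_cat p a b : (val (p ++ a) < val (p ++ b)) = (val a < val b).
Proof.
elim: p => [|x p IH] //=; rewrite -IH; apply/idP/idP => h; lra.
Qed.

Lemma val_mirror s : val (map flipLR s) = - val s.
Proof. elim: s => [|x t IH] /=; first lra. rewrite IH; case: x => /=; lra. Qed.

Lemma blocks_flip b t : blocks (flipLR b) t = map flipLR (blocks b t).
Proof.
elim: t b => [|k t IH] b //=. rewrite map_cat map_nseq IH.
by case: b.
Qed.

Lemma val_rcons s x : val (rcons s x) = val s + sg x / 2 ^+ (size s).+1.
Proof.
elim: s => [|y s IH] /=; first by rewrite expr1; lra.
rewrite IH !exprS.
have hq : (2 : rat) ^+ (size s) != 0 by rewrite expf_neq0.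
set q := (2 : rat) ^+ (size s) in hq *.
by field.
Qed.

Lemma r_val S : r S = 1 + val S.
Proof.
elim/last_ind: S => [|s x IH]; first by rewrite /r /=; lra.
rewrite /r rev_rcons /= size_rev -/(r s) IH val_rcons.
by case: x => /=; lra.
Qed.

Definition crit (ks ks' : seq nat) : Prop := exists i : nat,
  (forall j, (j < i)%N -> nth 0%N ks j = nth 0%N ks' j) /\
  ((~~ odd i /\ (nth 0%N ks i < nth 0%N ks' i)%N) \/
   (odd i /\ (nth 0%N ks' i < nth 0%N ks i)%N)).

Lemma crit_cons k t k' t' :
  crit (k :: t) (k' :: t') <-> (k < k')%N \/ (k = k' /\ crit t' t).
Proof.
split.
- case=> [[|i] [Heq H]].
  + by left; case: H => [[_ h]|[h _]].
  + right; have e0 := Heq 0%N erefl; split => //.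
    exists i; split; first by move=> j hj; symmetry; exact: (Heq j.+1 hj).
    rewrite /= in H; case: H => [[h1 h2]|[h1 h2]]; [right|left]; split => //.
    by rewrite negbK in h1.
- case => [h|[-> [i [Heq H]]]].
  + by exists 0%N; split => //; left.
  + exists i.+1; split.
      by case => [|j] //= hj; symmetry; exact: Heq.
    rewrite /= negbK.
    by case: H => [[h1 h2]|[h1 h2]]; [right|left]; split.
Qed.

Lemma crit_ext a a2 b b2 : (forall j, nth 0%N a j = nth 0%N a2 j) ->
  (forall j, nth 0%N b j = nth 0%N b2 j) -> crit a b <-> crit a2 b2.
Proof.
move=> ea eb; split; case=> i [H1 H2]; exists i; split.
- by move=> j hj; rewrite -ea -eb; apply: H1.
- by rewrite -ea -eb.
- by move=> j hj; rewrite ea eb; apply: H1.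
- by rewrite ea eb.
Qed.

Lemma nth_norm (ks : seq nat) j : nth 0%N ks j = nth 0%N (head 0%N ks :: behead ks) j.
Proof. case: ks => [|a l] //. by case: j => [|j] /=; rewrite ?nth_nil. Qed.

Lemma Sof_norm ks : Sof ks = Sof (head 0%N ks :: behead ks).
Proof. by case: ks. Qed.

Lemma crit_irr a : ~ crit a a.
Proof. by case=> i [_ [[_ h]|[_ h]]]; rewrite ltnn in h. Qed.

Definition pos (k : nat) : bool := (0 < k)%N.

Lemma lt_lemma k t k' t' : (k < k')%N -> all pos t ->
  val (Sof (k :: t)) < val (Sof (k' :: t')).
Proof.
move=> hk Ht; rewrite /Sof /=.
have -> : k' = (k + (k' - k - 1).+1)%N by lia.
rewrite nseqD -catA val_cat.
have hb : val (blocks L t) <= 0.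
  case: t Ht => [|k2 t2] /=; first by move=> _; lra.
  case/andP; case: k2 => [//|k2] _ _ /=.
  have [h1 h2] := val_bound (nseq k2 L ++ blocks R t2); lra.
have [h1 h2] := val_bound (nseq (k' - k - 1) R ++ blocks L t'); rewrite /=; lra.
Qed.

Lemma main n : forall k t k' t', (size t + size t' < n)%N -> all pos t -> all pos t' ->
  (val (Sof (k :: t)) < val (Sof (k' :: t')) <-> crit (k :: t) (k' :: t')).
Proof.
elim: n => [|n IH] k t k' t' hs Ht Ht' //.
case: (ltngtP k k') => [hlt|hgt|heq].
- by split => _; [rewrite crit_cons; left|exact: lt_lemma].
- split.
  + move=> h; exfalso; have := lt_lemma k' t' k t hgt Ht'; lra.
  + rewrite crit_cons => -[h|[e _]]; lia.
- subst k'; rewrite crit_cons ltnn.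
  suff E : val (Sof t') < val (Sof t) <-> crit t' t.
    rewrite /Sof /= val_cat -[L]/(flipLR R) !blocks_flip !val_mirror ltrN2 -/(Sof t) -/(Sof t') E.
    by split => [h|[//|[_ h]]]; [right|].
  have [[-> ->]|hne] : (t = [::] /\ t' = [::]) \/ (0 < size t + size t')%N.
    by case: t {hs Ht}; case: t' {Ht'} => //=; auto.
  + split => h; [by rewrite ltxx in h| by case: (@crit_irr [::] h)].
  rewrite (Sof_norm t) (Sof_norm t') (crit_ext _ _ _ _ (nth_norm t') (nth_norm t)).
  apply: IH.
  + rewrite !size_behead; lia.
  + by case: t' Ht' {hs hne} => //= ? ? /andP[].
  + by case: t Ht {hs hne} => //= ? ? /andP[].
Qed.

Definition lastL (s : seq LR) := ohead (rev s).
Definition isL (o : option LR) : bool := if o is Some L then true else false.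

Lemma N_odd S : odd (N S) = isL (lastL S).
Proof.
rewrite /N /lastL; case: (rev S) => [|[] t] //=.
- by rewrite addn1 /= odd_double.
- by rewrite oddD odd_double.
Qed.

Lemma lastL_cat a c y : lastL c = Some y -> lastL (a ++ c) = Some y.
Proof. by rewrite /lastL rev_cat; case: (rev c). Qed.

Lemma lastL_blocks b t : all pos t -> t != [::] ->
  lastL (blocks b t) = Some (if odd (size t) then b else flipLR b).
Proof.
elim: t b => [|k t IH] b //= /andP[hk Ht] _.
case: t IH Ht => [|k2 t2] IH Ht.
- rewrite cats0 /lastL rev_nseq /=; case: k hk => //.
- apply: lastL_cat; rewrite IH //=.
  by case: (odd (size t2)); case: b.
Qed.

Lemma partA S :
  (exists ks, valid_ks ks /\ Sof ks = S) /\
  (forall ks, valid_ks ks -> Sof ks = S -> odd (Mof ks) = odd (N S)).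
Proof.
split.
- elim: S => [|x S [[|k0 rest] [hv hS]]].
  + by exists [:: 0%N].
  + by [].
  case: x.
  + case: k0 hS hv => [|k0] hS hv.
    * case: rest hS hv => [|k1 rest'] hS hv.
      - by exists [:: 0%N; 1%N]; rewrite -hS.
      - exists [:: 0%N, k1.+1 & rest']; split; last by rewrite -hS.
        by move: hv; rewrite /valid_ks /= => /andP[].
    * exists [:: 0%N, 1%N, k0.+1 & rest]; split; last by rewrite -hS.
      by move: hv; rewrite /valid_ks /=.
  + exists (k0.+1 :: rest); split; last by rewrite -hS.
    by move: hv; rewrite /valid_ks /=.
- case=> [//|k t] hv <-; rewrite N_odd /Mof /=.
  move: hv; rewrite /valid_ks /= => Ht.
  case: t Ht => [|k2 t2] Ht.
  + by rewrite /Sof /= cats0 /lastL rev_nseq; case: k.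
  + have -> : lastL (Sof [:: k, k2 & t2]) = Some (if odd (size (k2 :: t2)) then L else flipLR L).
      exact: (@lastL_cat (nseq k R) _ _ (@lastL_blocks L (k2 :: t2) Ht isT)).
    by case: (odd (size (k2 :: t2))).
Qed.

Theorem corollary3 :
  (* (a) *)
  (forall S : seq LR,
      (exists ks, valid_ks ks /\ Sof ks = S) /\
      (forall ks, valid_ks ks -> Sof ks = S -> odd (Mof ks) = odd (N S)))
  /\
  (* (b) *)
  (forall ks ks' : seq nat, valid_ks ks -> valid_ks ks' ->
      ((r (Sof ks) < r (Sof ks'))%R <->
       exists i : nat,
         (forall j, (j < i)%N -> nth 0%N ks j = nth 0%N ks' j) /\
         ((~~ odd i /\ (nth 0%N ks i < nth 0%N ks' i)%N) \/
          (odd i /\ (nth 0%N ks' i < nth 0%N ks i)%N)))).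
Proof.
split; first exact: partA.
case=> [//|k t] [//|k' t'] hv hv'.
rewrite !r_val ltrD2l.
apply: (@main (size t + size t').+1) => //.
Qed.
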